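(* There is $d_0$ such that the following holds for all $d\geq d_0$. Let $G$ be a graph on $n$ vertices with average degree $d$. Then there exists a non-empty bipartite subgraph $G'$ of $G$ with parts $X$ and $Y$ such that $e(G')\geq|X|\cdot\frac{\Delta(G')}{80}$ and $e(G')\geq|Y|\cdot\frac{d}{10\log n}$.
   Context: $e(G')$ is the number of edges and $\Delta(G')$ the maximum degree of $G'$. Logarithms are base $2$. *)

(* Defs.v *)
From mathcomp Require Import all_boot.
From Stdlib Require Import Reals.
Set Implicit Arguments. Unset Strict Implicit. Unset Printing Implicit Defensive.

Definition simple_graph (T : finType) (e : rel T) : Prop :=
  (forall x y, e x y = e y x) /\ (forall x, ~~ e x x).

(* Number of ordered adjacent pairs = 2 e(G). *)
Definition n_arcs (T : finType) (e : rel T) : nat :=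
  #|[set p : T * T | e p.1 p.2]|.

Definition avg_degree (T : finType) (e : rel T) : R :=
  (INR (n_arcs e) / INR #|T|)%R.

(* A bipartite subgraph G' of G with parts X, Y: X, Y disjoint vertex sets,
   edge set F given as pairs (x, y) with x in X, y in Y and xy an edge of G.
   The vertex set of G' is X :|: Y. *)
Definition bip_subgraph (T : finType) (e : rel T) (X Y : {set T})
  (F : {set T * T}) : Prop :=
  [disjoint X & Y] /\
  (forall p, p \in F -> [/\ p.1 \in X, p.2 \in Y & e p.1 p.2]).

Definition bip_edges (T : finType) (F : {set T * T}) : nat := #|F|.

Definition bip_deg (T : finType) (F : {set T * T}) (v : T) : nat :=
  #|[set y | (v, y) \in F]| + #|[set x | (x, v) \in F]|.

Definition bip_maxdeg (T : finType) (F : {set T * T}) : nat :=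
  \max_(v : T) bip_deg F v.

Definition log2 (x : R) : R := (ln x / ln 2)%R.

(* Main.v *)
Require Import Defs.
From mathcomp Require Import all_boot zify.
Set Implicit Arguments. Unset Strict Implicit. Unset Printing Implicit Defensive.

Definition tg (T : finType) (x : T) (A : {set T}) : {set T} :=
  if x \in A then A :\ x else x |: A.

Lemma tg_in (T : finType) (x z : T) A :
  (z \in tg x A) = (if z == x then x \notin A else z \in A).
Proof.
rewrite /tg; case: (eqVneq z x) => [->|nzx].
  by case: (x \in A); rewrite ?setD11 ?setU11.
by case: (x \in A); rewrite ?in_setD1 ?in_setU1 (negPf nzx).
Qed.

Lemma tgK (T : finType) (x : T) : involutive (tg x).
Proof.
move=> A; apply/setP => z; rewrite tg_in.
case: (eqVneq z x) => [->|nzx]; last by rewrite tg_in (negPf nzx).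
by rewrite tg_in eqxx negbK.
Qed.

Lemma cnt (T : finType) (x y : T) : x != y ->
  4 * \sum_(A : {set T}) ((x \in A) && (y \notin A)) = #|{set T}|.
Proof.
move=> nxy.
have e1 : \sum_(A : {set T}) ((x \in A) && (y \notin A)) =
          \sum_(A : {set T}) ((x \notin A) && (y \notin A)).
  rewrite (reindex_inj (inv_inj (tgK x))) /=; apply: eq_bigr => A _.
  by rewrite !tg_in eqxx eq_sym (negPf nxy).
have e2 : \sum_(A : {set T}) ((x \in A) && (y \notin A)) =
          \sum_(A : {set T}) ((x \notin A) && (y \in A)).
  rewrite (reindex_inj (inv_inj (@setCK T))) /=; apply: eq_bigr => A _.
  by rewrite !in_setC negbK.
have e3 : \sum_(A : {set T}) ((x \notin A) && (y \in A)) =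
          \sum_(A : {set T}) ((x \in A) && (y \in A)).
  rewrite (reindex_inj (inv_inj (tgK x))) /=; apply: eq_bigr => A _.
  by rewrite !tg_in eqxx eq_sym (negPf nxy) negbK.
have tot : \sum_(A : {set T}) (((x \in A) && (y \notin A)) + ((x \notin A) && (y \notin A))
     + ((x \notin A) && (y \in A)) + ((x \in A) && (y \in A))) = #|{set T}|.
  rewrite -sum1_card; apply: eq_bigr => A _.
  by case: (x \in A); case: (y \in A).
rewrite -tot !big_split /= -e1 -e3 -e2.
rewrite !mulSn mul0n addn0 !addnA; congr (_ + _ + _ + _); apply: eq_bigr => A _; by case: (x \in A); case: (y \in A).
Qed.

Lemma card_sum (T : finType) (P : pred T) : #|[set x | P x]| = \sum_x P x.
Proof. by rewrite -sum1dep_card big_mkcond; apply: eq_bigr => x _; case: (P x). Qed.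

Lemma comb (T : finType) (e : rel T) :
  (forall x y, e x y = e y x) -> (forall x, ~~ e x x) ->
  let deg x := \sum_y (e x y : nat) in
  let NN := \sum_x deg x in
  exists (X Y : {set T}) (F : {set T * T}),
    [disjoint X & Y] /\
    (forall p, p \in F -> [/\ p.1 \in X, p.2 \in Y & e p.1 p.2]) /\
    9 * NN <= 80 * (trunc_log 2 #|T|).+1 * #|F| /\
    #|X| * \max_(v : T) (#|[set y | (v, y) \in F]| + #|[set x | (x, v) \in F]|)
      <= 80 * #|F|.
Proof.
move=> esym eirr deg NN.
pose K := trunc_log 2 #|T|.
pose cls x := trunc_log 2 (deg x).
pose dn x y := e x y && (cls y <= cls x).
have degn x : deg x <= #|T|.
  rewrite -sum1_card; apply: leq_sum => y _; by case: (e x y).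
have clsK x : cls x < K.+1 by rewrite ltnS leq_trunc_log.
have degcls x : deg x < 2 ^ (cls x).+1 by apply: trunc_log_ltn.
have clsdeg x : 0 < deg x -> 2 ^ cls x <= deg x by move=> h; apply: trunc_logP.
have S1 : NN <= 2 * \sum_x \sum_y (dn x y : nat).
  rewrite mul2n -addnn {2}exchange_big -big_split /=.
  apply: leq_sum => x _; rewrite -big_split /=; apply: leq_sum => y _.
  rewrite /dn (esym y x); case: (e x y) => //=.
  by case: (leqP (cls y) (cls x)) => // /ltnW ->; case: (e y x).
pose D (A : {set T}) x := \sum_y ((y \notin A) && dn x y : nat).
have Ddeg A x : D A x <= deg x.
  apply: leq_sum => y _; rewrite /dn; case: (e x y); rewrite ?andbF ?andbT //; exact: leq_b1.
pose P (A : {set T}) := \sum_x (x \in A) * D A x.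
pose S (A : {set T}) := \sum_x (x \in A) * deg x.
pose M := #|{set T}|.
have S2 : 4 * \sum_A P A = M * \sum_x \sum_y (dn x y : nat).
  have -> : \sum_A P A = \sum_x \sum_y
      (\sum_(A : {set T}) ((x \in A) && (y \notin A))) * (dn x y : nat).
    transitivity (\sum_(A : {set T}) \sum_x \sum_y
        ((x \in A) && (y \notin A)) * (dn x y : nat)).
      apply: eq_bigr => A _; apply: eq_bigr => x _; rewrite big_distrr /=.
      apply: eq_bigr => y _.
      by case: (x \in A); case: (y \in A); case: (dn x y).
    rewrite exchange_big /=; apply: eq_bigr => x _.
    rewrite exchange_big /=; apply: eq_bigr => y _; by rewrite big_distrl.
  rewrite !big_distrr /=; apply: eq_bigr => x _.
  rewrite !big_distrr /=; apply: eq_bigr => y _.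
  case: (eqVneq x y) => [<-|nxy]; first by rewrite /dn (negPf (eirr x)) !muln0.
  by rewrite mulnA cnt.
have S3 : 2 * \sum_A S A = M * NN.
  rewrite mul2n -addnn {2}(reindex_inj (inv_inj (@setCK T))) -big_split /=.
  transitivity (\sum_(A : {set T}) NN); last by rewrite sum_nat_const.
  apply: eq_bigr => A _; rewrite /S -big_split /=; apply: eq_bigr => x _.
  by rewrite in_setC; case: (x \in A); rewrite /= ?mul1n ?mul0n ?addn0.
have Mpos : 0 < M by apply/card_gt0P; exists set0.
have [A HA] : exists A, 2 * S A + 9 * NN <= 80 * P A.
  case: (boolP [exists A, 2 * S A + 9 * NN <= 80 * P A]) => [/existsP [A HA]|/existsPn H].
    by exists A.
  have : \sum_A (80 * P A + 1) <= \sum_A (2 * S A + NN * 9).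
    apply: leq_sum => A _; have := H A; rewrite -ltnNge addn1 [NN * 9]mulnC. done.
  have -> : \sum_A (80 * P A + 1) = 80 * \sum_A P A + M.
    by rewrite big_split big_distrr sum_nat_const muln1.
  have -> : \sum_A (2 * S A + NN * 9) = 2 * \sum_A S A + M * (NN * 9).
    by rewrite big_split big_distrr sum_nat_const.
  have : M * NN <= M * (2 * \sum_x \sum_y (dn x y : nat)) by rewrite leq_mul2l S1 orbT.
  rewrite mulnCA -S2 S3. lia.
pose good x := (0 < deg x) && (deg x <= 40 * D A x).
pose G := \sum_x ((x \in A) && good x) * D A x.
have S4 : 9 * NN <= 80 * G.
  have : 80 * P A <= 80 * G + 2 * S A.
    rewrite /P /G /S !big_distrr -big_split /=; apply: leq_sum => x _.
    case: (x \in A); rewrite ?mul0n ?muln0 //= !mul1n.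
    case hg: (good x); rewrite /=.
    { by rewrite mul1n leq_addr. }
    rewrite mul0n muln0 add0n.
    move: hg; rewrite /good; have := Ddeg A x.
    case: (posnP (deg x)) => [-> | dp /=]; first by rewrite leqn0 => /eqP ->.
    move=> _ /negbT; rewrite -ltnNge => h; lia.
  lia.
pose W (i : nat) := \sum_x [&& x \in A, good x & cls x == i] * D A x.
have GW : G = \sum_(i < K.+1) W i.
  rewrite /W exchange_big /=; apply: eq_bigr => x _.
  rewrite (bigD1 (Ordinal (clsK x))) //= eqxx andbT big1 ?addn0 //.
  move=> j /eqP nj; rewrite (_ : (cls x == j) = false) ?andbF //.
  apply/negbTE; apply: contra_not_neq nj => hj; apply: val_inj => /=; by rewrite hj.
have [i Hi] : exists i : 'I_K.+1, 9 * NN <= 80 * K.+1 * W i.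
  case: (boolP [exists i : 'I_K.+1, 9 * NN <= 80 * K.+1 * W i]) => [/existsP [i Hi]|/existsPn H].
    by exists i.
  have : \sum_(i < K.+1) (80 * K.+1 * W i + 1) <= \sum_(i < K.+1) (9 * NN).
    apply: leq_sum => j _; have := H j; rewrite -ltnNge addn1. done.
  rewrite big_split -big_distrr /= sum_nat_const card_ord -GW sum_nat_const card_ord.
  have := leq_mul (leqnn K.+1) S4. nia.
pose X := [set x | [&& x \in A, good x & cls x == i]].
pose Y := [set y | (y \notin A) && (cls y <= i)].
pose F := [set p : T * T | [&& p.1 \in X, p.2 \in Y & e p.1 p.2]].
have XA x : x \in X -> x \in A by rewrite inE => /and3P [].
have YA y : y \in Y -> y \notin A by rewrite inE => /andP [].
have XY v : v \in X -> v \in Y -> False by move=> /XA h /YA; rewrite h.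
exists X, Y, F.
split.
  rewrite disjoints_subset; apply/subsetP => x hx; rewrite inE; apply/negP => hy.
  exact: XY hx hy.
split.
  by move=> p; rewrite inE => /and3P [? ? ?]; split.
have FW : #|F| = W i.
  rewrite card_sum -(pair_bigA _ (fun x y => ([&& x \in X, y \in Y & e x y] : nat))) /=.
  apply: eq_bigr => x _.
  case hx: (x \in X); last first.
    rewrite big1 //; move: hx; rewrite inE => ->; by rewrite mul0n.
  move: (hx); rewrite inE => /and3P [-> -> /eqP cx] /=. rewrite cx eqxx mul1n.
  apply: eq_bigr => y _; rewrite inE /dn cx.
  by case: (y \in A); case: (e x y); case: (cls y <= i).
split; first by rewrite FW.
have md : \max_(v : T) (#|[set y | (v, y) \in F]| + #|[set x | (x, v) \in F]|) <= 2 ^ i.+1.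
  apply/bigmax_leqP => v _; rewrite !card_sum.
  have h1 : \sum_y ((v, y) \in F : nat) <= (v \in X) * deg v.
    case hv: (v \in X); last by rewrite big1 // => y _; rewrite inE /= hv.
    rewrite mul1n; apply: leq_sum => y _; rewrite inE /=.
    by case: (v \in X); case: (y \in Y); case: (e v y).
  have h2 : \sum_x ((x, v) \in F : nat) <= (v \in Y) * deg v.
    case hv: (v \in Y); last by rewrite big1 // => y _; rewrite inE /= hv andbF.
    rewrite mul1n; apply: leq_sum => y _; rewrite inE /= esym.
    by case: (y \in X); case: (v \in Y); case: (e v y).
  case hx: (v \in X).
    have hy : (v \in Y) = false by apply/negP => /(XY _ hx).
    rewrite hy /= in h2; rewrite hx /= in h1.
    move: (hx); rewrite inE => /and3P [_ _ /eqP cv].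
    have := degcls v; rewrite cv => hd.
    apply: leq_trans (leq_add h1 h2) _; rewrite mul1n mul0n addn0; exact: ltnW.
  rewrite hx /= in h1.
  case hy: (v \in Y).
    rewrite hy /= in h2.
    move: (hy); rewrite inE => /andP [_ cv].
    have := degcls v; have := leq_pexp2l (isT : 0 < 2) (cv : (cls v).+1 <= i.+1).
    move=> h3 h4; apply: leq_trans (leq_add h1 h2) _; rewrite mul0n mul1n add0n.
    exact: ltnW (leq_trans h4 h3).
  rewrite hy /= in h2.
  by apply: leq_trans (leq_add h1 h2) _; rewrite !mul0n.
apply: leq_trans (leq_mul (leqnn _) md) _.
rewrite FW card_sum big_distrl /W big_distrr /=; apply: leq_sum => x _.
case hx: [&& x \in A, good x & cls x == i]; last by [].
move: hx => /and3P [_ /andP [dp dD] /eqP cx]. rewrite /= !mul1n.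
have := clsdeg x dp; rewrite cx expnS; move: (2 ^ i) => t; move: (D A x) (deg x) dD => a b; lia.
Qed.

From Stdlib Require Import Reals Lra.

Lemma INR_mul (m n : nat) : INR (m * n) = (INR m * INR n)%R.
Proof. by rewrite mult_INR. Qed.
Lemma INR_exp (m n : nat) : INR (expn m n) = (INR m ^ n)%R.
Proof. rewrite -pow_INR; congr INR; elim: n => //= n IH; by rewrite expnS IH. Qed.
Lemma INR_leq (m n : nat) : m <= n -> (INR m <= INR n)%R.
Proof. move/leP. apply le_INR. Qed.
Lemma ln_le' (x y : R) : (0 < x)%R -> (x <= y)%R -> (ln x <= ln y)%R.
Proof.
move=> hx hxy; case: (Rle_lt_or_eq_dec _ _ hxy) => h.
  by apply: Rlt_le; apply: ln_increasing.
by rewrite h; apply: Rle_refl.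
Qed.

Theorem lemma4p2 :
  exists d0 : R, forall d : R, (d0 <= d)%R ->
  forall (T : finType) (e : rel T),
    simple_graph e -> 0 < #|T| -> avg_degree e = d ->
    exists (X Y : {set T}) (F : {set T * T}),
      bip_subgraph e X Y F /\ F != set0 /\
      (INR #|X| * (INR (bip_maxdeg F) / 80) <= INR (bip_edges F))%R /\
      (INR #|Y| * (d / (10 * log2 (INR #|T|))) <= INR (bip_edges F))%R.
Proof.
exists 256%R => d hd T e [esym eirr] hn hdef.
have [X [Y [F [Hdis [HF [H9 H1]]]]]] := comb esym eirr.
have hN : n_arcs e = \sum_x \sum_y (e x y : nat).
  by rewrite /n_arcs card_sum (pair_bigA _ (fun x y => (e x y : nat))).
have Nle : n_arcs e <= #|T| * #|T|.
  rewrite hN -sum_nat_const; apply: leq_sum => x _.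
  rewrite -sum1_card; apply: leq_sum => y _; by case: (e x y).
rewrite -hN in H9.
have hK := trunc_logP (isT : 1 < 2) hn.
move: H9 H1 Nle hdef hn hK.
rewrite /avg_degree /bip_maxdeg /bip_deg /bip_edges.
move: (n_arcs e) (trunc_log 2 #|T|) => N K.
move=> H9 H1 Nle hdef hn hK.
exists X, Y, F.
split; first by split.
have Yn := max_card Y.
have fpos : 0 < #|F|.
  case: (posnP #|F|) => [f0|//]; rewrite f0 muln0 in H9.
  have N0 : N = 0 by lia.
  move: hdef; rewrite N0 /= /Rdiv Rmult_0_l => h; lra.
split; first by rewrite -card_gt0.
move: (\max_v (#|[set y | (v, y) \in F]| + #|[set x | (x, v) \in F]|)) H1 => m H1.
have nR : (0 < INR #|T|)%R by apply: lt_0_INR; apply/ltP.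
have H1R := INR_leq H1; rewrite !INR_mul in H1R.
have I80 : INR 80 = 80%R by rewrite INR_IZR_INZ.
have I9 : INR 9 = 9%R by rewrite INR_IZR_INZ.
have I2 : INR 2 = 2%R by rewrite INR_IZR_INZ.
have H9R := INR_leq H9; rewrite !INR_mul I80 I9 S_INR in H9R.
have NleR := INR_leq Nle; rewrite INR_mul in NleR.
have YnR := INR_leq Yn.
have hKR := INR_leq hK; rewrite INR_exp in hKR.
rewrite I80 in H1R; rewrite I2 in hKR.
move: H1R H9R NleR YnR hKR hdef.
move: (INR #|X|) (INR m) (INR #|F|) (INR N) (INR #|Y|) (INR #|T|) (pos_INR N) nR (pos_INR #|F|) (pos_INR K) (pos_INR #|Y|).
move=> x mm f NN y n NNp nR fp kp yp H1R H9R NleR YnR hKR hdef.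
split.
  replace (x * (mm / 80))%R with ((x * mm) / 80)%R by field; lra.
have dn : d = (NN / n)%R by rewrite -hdef.
have n256 : (256 <= n)%R.
  have eq : NN = (NN / n * n)%R by field; lra.
  rewrite dn in hd; move: (NN / n)%R hd eq => q hq eq.
  nra.
have ln2 : (0 < ln 2)%R by rewrite -ln_1; apply: ln_increasing; lra.
have L8 : (8 * ln 2 <= ln n)%R.
  have I8 : INR 8 = 8%R by rewrite INR_IZR_INZ.
  rewrite -I8 -ln_pow; last lra.
  apply: ln_le'; first by apply: pow_lt; lra.
  simpl; lra.
have KL : (INR K * ln 2 <= ln n)%R.
  rewrite -ln_pow; last lra.
  by apply: ln_le' => //; apply: pow_lt; lra.
rewrite /log2.
set L := (ln n / ln 2)%R.
have hL8 : (8 <= L)%R.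
  rewrite /L; apply (Rmult_le_reg_r (ln 2)) => //.
  replace (ln n / ln 2 * ln 2)%R with (ln n) by (field; lra); lra.
have hKL : (INR K <= L)%R.
  rewrite /L; apply (Rmult_le_reg_r (ln 2)) => //.
  replace (ln n / ln 2 * ln 2)%R with (ln n) by (field; lra); lra.
have NNf : (NN <= 10 * L * f)%R by nra.
rewrite dn.
replace (y * (NN / n / (10 * L)))%R with ((y / n) * (NN / (10 * L)))%R by (field; lra).
have h1 : (y / n <= 1)%R.
  apply (Rmult_le_reg_r n) => //; replace (y / n * n)%R with y by (field; lra); lra.
have h2 : (0 <= NN / (10 * L))%R.
  apply: Rmult_le_pos; first lra.
  by apply: Rlt_le; apply: Rinv_0_lt_compat; lra.
have h3 : (NN / (10 * L) <= f)%R.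
  apply (Rmult_le_reg_r (10 * L)); first lra.
  replace (NN / (10 * L) * (10 * L))%R with NN by (field; lra); lra.
nra.
Qed.
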